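(* Let $(G,k,M^*,M)$ be a critical tuple and fix an edge $e\in E^+(C^+)$. Let $e_s,e_f$ be distinct edges of $C^+$ lying on $C_e$ and let $\mathcal{P}=C_e[e_s,e_f]$ be the sub-path of $C_e$ from $e_s$ to $e_f$ (inclusive). Then either $C^+[e_s,e_f]\subseteq r_f(\mathcal{P})$ or $C^+[e_f,e_s]\subseteq r_b(\mathcal{P})$.
   Context: $R(H)$ is the set of red edges of an edge set $H$. For a perfect matching $M$ of a red/blue edge-colored bipartite graph $G=(A\sqcup B,E)$, $G_M$ is the directed graph on $A\sqcup B$ with edges of $M$ oriented from $A$ to $B$ and other edges from $B$ to $A$, weighted by $w_M(e)=0$ for blue $e$, $-1$ for red $e\in M$, $+1$ for red $e\notin M$; $E^+(H)$ (resp. $E^-(H)$) is the set of red edges of $H$ not in $M$ (resp. in $M$), $w_M(H)=|E^+(H)|-|E^-(H)|$. Paths and cycles are directed and identified with edge sets. For a directed cycle $C$ and sub-paths/edges $P_1,P_2$ of it, $C[P_1,P_2]$ is the sub-path of $C$ from $P_1$ to $P_2$, both included. For an edge $e$, $M^e$ is a perfect matching containing $e$ with the minimum number of red edges among those containing $e$. A tuple $(G,k,M^*,M)$ is critical if: every edge of $G$ lies in some perfect matching; $|R(M^* )|=k$; $|R(M)|<\frac13k$; every directed cycle $C$ of $G_M$ with $w_M(C)>0$ has $|E^+(C)|>\frac23k$; and $|R(M^e)|<\frac13k$ for every red $e\in M^*\setminus M$. $C^+$ is the unique positive-weight directed cycle of $G_M$ contained in $M\Delta M^*$. For $e\in E^+(C^+)$,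 $C_e$ is the unique directed cycle of $G_M$ in $M\Delta M^e$ containing $e$. A jump of $C_e$ is a sub-path $Q$ of $C_e$ with endpoints on $C^+$, no inner vertex on $C^+$ and $Q\cap C^+=\emptyset$; interjumps are the sub-paths of $C_e$ contained in $C^+$ between consecutive jumps. For a jump $Q$, $C_Q$ is the unique directed cycle in $C^+\cup Q$ containing $Q$; $Q$ is forward if $w_M(C_Q)>0$, backward otherwise; reach $r(Q)=C^+\setminus C_Q$ if forward, $r(Q)=C_Q\setminus Q$ if backward. For a sub-path $\mathcal{P}$ of $C_e$ with endpoints on $C^+$, the forward reach $r_f(\mathcal{P})$ is the union of $\mathcal{P}\cap C^+$ (the parts of interjumps in $\mathcal{P}$) and the reaches of all forward jumps contained in $\mathcal{P}$; the backward reach $r_b(\mathcal{P})$ is the union of the reaches of all backward jumps contained in $\mathcal{P}$. *)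

(* Defs.v *)
From mathcomp Require Import all_boot all_order all_algebra.
Set Implicit Arguments.
Unset Strict Implicit.
Unset Printing Implicit Defensive.
Import GRing.Theory Num.Theory.

(* A red/blue edge-coloured bipartite (multi)graph G = (A ⊔ B, E):
   edges form a finite type E, edge f joins ea f ∈ A and eb f ∈ B,
   red f says f is red (otherwise blue).  Vertices are A + B. *)
Section Matchings.
Variables (A B E : finType) (ea : E -> A) (eb : E -> B) (red : pred E).

Definition vtx := (A + B)%type.

Definition simple_graph : Prop := injective (fun f => (ea f, eb f)).

Definition incident (f : E) (v : vtx) : bool :=
  (v == inl (ea f)) || (v == inr (eb f)).

Definition perfect (M : {set E}) : Prop :=
  forall v : vtx, #|[set f in M | incident f v]| = 1%N.

Definition Rd (H : {set E}) : {set E} := [set f in H | red f].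

(* G_M : edges of M oriented A -> B, others B -> A *)
Definition tl (M : {set E}) (f : E) : vtx :=
  if f \in M then inl (ea f) else inr (eb f).
Definition hd (M : {set E}) (f : E) : vtx :=
  if f \in M then inr (eb f) else inl (ea f).

Definition Eplus (M H : {set E}) : {set E} := [set f in H | red f & f \notin M].
Definition Eminus (M H : {set E}) : {set E} := [set f in H | red f & f \in M].
Definition wM (M H : {set E}) : int := (#|Eplus M H|%:Z - #|Eminus M H|%:Z)%R.

Definition dcycle_seq (M : {set E}) (s : seq E) : Prop :=
  match s with
  | [::] => False
  | f0 :: _ =>
      (forall i, (i.+1 < size s)%N ->
         hd M (nth f0 s i) = tl M (nth f0 s i.+1))
      /\ hd M (last f0 s) = tl M f0
      /\ uniq (map (tl M) s)
  end.

(* directed cycles are identified with their edge sets *)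
Definition is_dcycle (M C : {set E}) : Prop :=
  exists s, dcycle_seq M s /\ C = [set f in s].

Definition nxt (M C : {set E}) (f : E) : E :=
  odflt f [pick g in C | tl M g == hd M f].

(* C[x, y]: the sub-path of the directed cycle C from edge x to edge y,
   both included *)
Definition carc (M C : {set E}) (x y : E) : {set E} :=
  [set z | [exists i : 'I_#|E|.+1,
      (z == iter i (nxt M C) x) &&
      [forall j : 'I_#|E|.+1, (j < i)%N ==> (iter j (nxt M C) x != y)]]].

Definition on_set (C : {set E}) (v : vtx) : bool :=
  [exists f in C, incident f v].

Definition subpath (M C Q : {set E}) (x y : E) : Prop :=
  [/\ x \in C, y \in C, Q = carc M C x y & Q != C].

Definition sym_diff (X Y : {set E}) : {set E} := (X :\: Y) :|: (Y :\: X).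

Definition is_Me (e : E) (Me : {set E}) : Prop :=
  [/\ perfect Me, e \in Me &
      forall M', perfect M' -> e \in M' -> (#|Rd Me| <= #|Rd M'|)%N].

Definition critical (k : nat) (Ms M : {set E}) : Prop :=
  [/\ (forall f : E, exists Mf, perfect Mf /\ f \in Mf),
      perfect Ms, perfect M,
      #|Rd Ms| = k &
      [/\ (3 * #|Rd M| < k)%N,
      (forall C, is_dcycle M C -> (0 < wM M C)%R -> (2 * k < 3 * #|Eplus M C|)%N) &
      (forall f, red f -> f \in Ms :\: M ->
         forall Mf, is_Me f Mf -> (3 * #|Rd Mf| < k)%N)]].

Definition is_Cplus (Ms M Cp : {set E}) : Prop :=
  [/\ is_dcycle M Cp, Cp \subset sym_diff M Ms & (0 < wM M Cp)%R].

Definition is_Ce (M Me Ce : {set E}) (e : E) : Prop :=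
  [/\ is_dcycle M Ce, Ce \subset sym_diff M Me & e \in Ce].

Definition jump (M Cp Ce Q : {set E}) : Prop :=
  exists x y, [/\ subpath M Ce Q x y,
    on_set Cp (tl M x), on_set Cp (hd M y),
    (forall z, z \in Q -> z != y -> ~~ on_set Cp (hd M z)) &
    [disjoint Q & Cp]].

Definition is_CQ (M Cp Q CQ : {set E}) : Prop :=
  [/\ is_dcycle M CQ, CQ \subset Cp :|: Q & Q \subset CQ].

Definition forward (M Cp Q : {set E}) : Prop :=
  exists CQ, is_CQ M Cp Q CQ /\ (0 < wM M CQ)%R.
Definition backward (M Cp Q : {set E}) : Prop :=
  exists CQ, is_CQ M Cp Q CQ /\ ~ (0 < wM M CQ)%R.

Definition in_reach (M Cp Q : {set E}) (f : E) : Prop :=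
  exists CQ, is_CQ M Cp Q CQ /\
    (if (0 < wM M CQ)%R then f \in Cp :\: CQ else f \in CQ :\: Q).

Definition in_rf (M Cp Ce P : {set E}) (f : E) : Prop :=
  f \in P :&: Cp \/
  exists Q, [/\ jump M Cp Ce Q, Q \subset P, forward M Cp Q & in_reach M Cp Q f].

Definition in_rb (M Cp Ce P : {set E}) (f : E) : Prop :=
  exists Q, [/\ jump M Cp Ce Q, Q \subset P, backward M Cp Q & in_reach M Cp Q f].

End Matchings.

(* Main.v *)
Require Import Defs.
From mathcomp Require Import all_boot all_order all_algebra.
From mathcomp Require Import zify ring.
Set Implicit Arguments.
Unset Strict Implicit.
Unset Printing Implicit Defensive.
Import GRing.Theory Num.Theory.
Ltac is_arith P := lazymatch P with
 | is_true (leq _ _) => idtac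
 | is_true (@Order.le _ _ _ _) => idtac
 | is_true (@Order.lt _ _ _ _) => idtac
 | is_true (_ && _) => idtac
 | @eq ?U _ _ => first [unify U nat | unify U int]
 | _ => fail
 end.
Ltac slia := repeat match goal with
 | H : ?P |- _ => match type of P with Prop => idtac end;
    tryif (is_arith P) then fail else clear H
 end; lia.

Local Open Scope ring_scope.

Lemma mult_small (n q : int) : 0 < n -> -n < q*n -> q * n < n -> q = 0.
Proof. move=> h1 h2 h3. have [q0|[q0|q0]] : 1 <= q \/ q = 0 \/ q <= -1 by lia.
 - have : 1 * n <= q * n by rewrite ler_pM2r. lia.
 - by [].
 - have : q * n <= -1 * n by rewrite ler_pM2r. lia. Qed.

Definition cyc (E : Type) (x0 : E) (s : seq E) (i : int) : E :=
  nth x0 s (absz (i %% (size s)%:Z)%Z).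

Lemma modz_rng (i : int) (n : nat) : (0 < n)%N -> 0 <= (i %% n)%Z < n.
Proof. move=> n0. rewrite modz_ge0 /=; last by lia. by rewrite ltz_pmod //; lia. Qed.

Lemma cyc_lt (E : Type) (s : seq E) i : (0 < size s)%N -> (absz (i %% (size s)%:Z)%Z < size s)%N.
Proof. move=> n0. have := modz_rng i n0. lia. Qed.

Lemma cyc_nat (E : Type) (x0 : E) s (j : nat) : (j < size s)%N -> cyc x0 s j = nth x0 s j.
Proof. move=> h. rewrite /cyc modz_small //; lia. Qed.

Lemma cyc_add (E : Type) (x0 : E) s i q : cyc x0 s (i + q * (size s)%:Z) = cyc x0 s i.
Proof. by rewrite /cyc addrC modzMDl. Qed.

Lemma cyc_in (E : eqType) (x0 : E) s i : (0 < size s)%N -> cyc x0 s i \in s.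
Proof. move=> n0. by apply: mem_nth; apply: cyc_lt. Qed.

Lemma in_cyc (E : eqType) (x0 : E) s x : x \in s -> x = cyc x0 s (index x s).
Proof. move=> h. rewrite cyc_nat ?index_mem // nth_index //. Qed.

Lemma cyc_eq (E : eqType) (x0 : E) s i j : (0 < size s)%N -> uniq s ->
  cyc x0 s i = cyc x0 s j -> exists q : int, i - j = q * (size s)%:Z.
Proof.
move=> n0 us /eqP. rewrite /cyc nth_uniq ?cyc_lt // => /eqP h.
have hi := modz_rng i n0. have hj := modz_rng j n0.
have e : (i %% size s)%Z = (j %% size s)%Z by lia.
exists ((i %/ size s)%Z - (j %/ size s)%Z).
rewrite {1}(divz_eq i (size s)) {1}(divz_eq j (size s)) e. ring.
Qed.

Lemma cyc_map (E V : Type) (x0 : E) (f : E -> V) s i : (0 < size s)%N ->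
  cyc (f x0) (map f s) i = f (cyc x0 s i).
Proof. move=> n0. by rewrite /cyc size_map (nth_map x0) // cyc_lt. Qed.


Lemma dc_basic (A B E : finType) (ea : E -> A) (eb : E -> B) (M : {set E}) s :
  dcycle_seq ea eb M s -> [/\ (0 < size s)%N, uniq (map (tl ea eb M) s) & uniq s].
Proof. case: s => [|f0 s'] //= [_ [_ u]]. have u2 : uniq (map (tl ea eb M) (f0 :: s')) by []. split => //. exact: (map_uniq u2). Qed.

Lemma dc_size (A B E : finType) (ea : E -> A) (eb : E -> B) (M : {set E}) s :
  dcycle_seq ea eb M s -> (size s <= #|E|)%N.
Proof. case/dc_basic => _ _ u. move/card_uniqP: u => <-. exact: max_card. Qed.

Lemma dc_next (A B E : finType) (ea : E -> A) (eb : E -> B) (M : {set E}) s x0 i :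
  dcycle_seq ea eb M s -> hd ea eb M (cyc x0 s i) = tl ea eb M (cyc x0 s (i + 1)).
Proof.
move=> dc. have [n0 _ _] := dc_basic dc.
case: s dc n0 => [|f0 s'] // [ch [la _]] n0.
set s := f0 :: s' in ch la n0 *.
set n := size s.
have hr := modz_rng i n0.
set r := absz (i %% n)%Z.
have er : (i %% n)%Z = r%:Z by rewrite /r; lia.
have ei : i = r%:Z + (i %/ n)%Z * n by rewrite {1}(divz_eq i n) er; ring.
have ei1 : i + 1 = (r.+1)%:Z + (i %/ n)%Z * n by rewrite {1}ei; lia.
rewrite ei1 ei /n !cyc_add.
have rn : (r < n)%N by rewrite /r; lia.
rewrite (cyc_nat x0 rn) (set_nth_default f0 x0 rn).
case: (ltnP r.+1 n) => h.
  by rewrite (cyc_nat x0 h) (set_nth_default f0 x0 h) ch.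
have er1 : r.+1 = n by lia.
have -> : (r.+1)%:Z = (size s)%:Z by rewrite er1.
have := cyc_add x0 s 0 1. rewrite add0r mul1r => ->.
rewrite (cyc_nat x0 n0) /=.
have -> : r = n.-1 by lia.
by rewrite nth_last.
Qed.

Lemma dc_Tinj (A B E : finType) (ea : E -> A) (eb : E -> B) (M : {set E}) s x0 i j :
  dcycle_seq ea eb M s -> tl ea eb M (cyc x0 s i) = tl ea eb M (cyc x0 s j) ->
  exists q : int, i - j = q * (size s)%:Z.
Proof.
move=> dc. have [n0 u _] := dc_basic dc.
rewrite -!(cyc_map x0 (tl ea eb M)) // => e.
have n0' : (0 < size (map (tl ea eb M) s))%N by rewrite size_map.
have := cyc_eq n0' u e. by rewrite size_map.
Qed.

Lemma dc_nxt (A B E : finType) (ea : E -> A) (eb : E -> B) (M : {set E}) s x0 i :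
  dcycle_seq ea eb M s -> nxt ea eb M [set f in s] (cyc x0 s i) = cyc x0 s (i + 1).
Proof.
move=> dc. have [n0 u us] := dc_basic dc.
rewrite /nxt. case: pickP => [g /andP[gC /eqP hg] | none] /=.
  rewrite inE in gC. rewrite (in_cyc x0 gC) in hg *.
  rewrite (dc_next x0 i dc) in hg.
  have [q hq] := dc_Tinj dc hg.
  have -> : (index g s)%:Z = (i + 1) + q * (size s)%:Z by lia. by rewrite cyc_add.
have := none (cyc x0 s (i + 1)). by rewrite inE cyc_in //= (dc_next x0 i dc) eqxx.
Qed.

Lemma dc_iter (A B E : finType) (ea : E -> A) (eb : E -> B) (M : {set E}) s x0 i (j : nat) :
  dcycle_seq ea eb M s -> iter j (nxt ea eb M [set f in s]) (cyc x0 s i) = cyc x0 s (i + j%:Z).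
Proof.
move=> dc. elim: j => [|j IH]; first by rewrite addr0.
by rewrite iterS IH (dc_nxt _ _ dc); congr cyc; lia.
Qed.

Lemma dc_carc (A B E : finType) (ea : E -> A) (eb : E -> B) (M : {set E}) s x0 i (d : nat) z :
  dcycle_seq ea eb M s -> (d < size s)%N ->
  (z \in carc ea eb M [set f in s] (cyc x0 s i) (cyc x0 s (i + d%:Z))) <->
  exists k : nat, (k <= d)%N /\ z = cyc x0 s (i + k%:Z).
Proof.
move=> dc dn. have [n0 u us] := dc_basic dc. have sE := dc_size dc.
rewrite /carc inE. split.
  case/existsP => k /andP[/eqP -> /forallP hj]. exists k.
  rewrite (dc_iter _ _ _ dc). split => //.
  case: (leqP k d) => // kd.
  have dE : (d < #|E|.+1)%N by lia.
  have := hj (Ordinal dE). by rewrite /= kd /= (dc_iter _ _ _ dc) eqxx.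
case=> k [kd ->].
have kE : (k < #|E|.+1)%N by lia.
apply/existsP; exists (Ordinal kE). rewrite /= (dc_iter _ _ _ dc) eqxx /=.
apply/forallP => j. apply/implyP => jk. rewrite (dc_iter _ _ _ dc). apply/eqP => e.
have [q hq] := cyc_eq n0 us e.
move: jk hq e; move: (nat_of_ord j) => jj jk hq _.
have {hq} hq : (i + jj%:Z - (i + d%:Z) = q * (size s)%:Z) := hq.
have : q = 0 by apply: (@mult_small (size s)); lia.
move=> q0. rewrite q0 in hq. lia.
Qed.

Lemma incidentP (A B E : finType) (ea : E -> A) (eb : E -> B) (M : {set E}) f v :
  incident ea eb f v = (v == tl ea eb M f) || (v == hd ea eb M f).
Proof. rewrite /incident /tl /hd. by case: (f \in M) => //; rewrite orbC. Qed.

Lemma on_setP (A B E : finType) (ea : E -> A) (eb : E -> B) (M : {set E}) s x0 v :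
  dcycle_seq ea eb M s ->
  on_set ea eb [set f in s] v <-> exists i, v = tl ea eb M (cyc x0 s i).
Proof.
move=> dc. have [n0 u us] := dc_basic dc. split.
  case/existsP => f /andP[]; rewrite inE => fs. rewrite (incidentP _ _ M) (in_cyc x0 fs).
  case/orP => /eqP ->; first by eexists.
  rewrite (dc_next _ _ dc); by eexists.
case=> i ->. apply/existsP; exists (cyc x0 s i). by rewrite inE cyc_in // (incidentP _ _ M) eqxx.
Qed.

Lemma mem_mkseqP (T : eqType) (F : nat -> T) N z :
  z \in mkseq F N <-> exists2 k, (k < N)%N & z = F k.
Proof.
rewrite /mkseq. split.
  case/mapP => k; rewrite mem_iota add0n => /andP[_ kN] ->. by exists k.
case=> k kN ->. apply: map_f. by rewrite mem_iota add0n.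
Qed.

Lemma mk_dcycle (A B E : finType) (ea : E -> A) (eb : E -> B) (M : {set E}) (F : nat -> E) N :
  (0 < N)%N ->
  (forall i, (i.+1 < N)%N -> hd ea eb M (F i) = tl ea eb M (F i.+1)) ->
  hd ea eb M (F N.-1) = tl ea eb M (F 0%N) ->
  (forall i j, (i < N)%N -> (j < N)%N -> tl ea eb M (F i) = tl ea eb M (F j) -> i = j) ->
  is_dcycle ea eb M [set f in mkseq F N].
Proof.
move=> N0 ch cl inj. exists (mkseq F N); split => //.
have sz := size_mkseq F N.
have nthF : forall x0 i, (i < N)%N -> nth x0 (mkseq F N) i = F i by move=> x0 i iN; rewrite nth_mkseq.
move: (erefl (mkseq F N)). case: {2}(mkseq F N) => [|f0 s'] Es.
  by move: sz; rewrite Es /= => h; rewrite -h in N0.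
have f0E : f0 = F 0%N by rewrite -(nthF f0 0%N N0) Es.
rewrite Es /dcycle_seq; cbv beta iota; rewrite -Es. split; last split.
- move=> i; rewrite sz => iN. by rewrite !nthF // ?ch //; lia.
- rewrite -nth_last sz nthF; last lia. by rewrite cl f0E.
- apply/(@uniqP _ (tl ea eb M f0)) => i j; rewrite !inE size_map sz => iN jN.
  rewrite !(nth_map f0) ?sz // !nthF //. exact: inj.
Qed.

Lemma divmodP (x : int) (n : nat) : (0 < n)%N ->
  exists Q : int, exists r : nat, x = Q * n%:Z + r%:Z /\ (r < n)%N.
Proof.
move=> n0. have h := modz_rng x n0. exists (x %/ n)%Z, (absz (x %% n)%Z).
split; last lia. rewrite {1}(divz_eq x n). have -> : ((absz (x %% n)%Z)%:Z = (x %% n)%Z) by lia. by [].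
Qed.

Lemma q_ge0 (n Q : int) : 0 < n -> -n < Q * n -> 0 <= Q.
Proof. move=> h1 h2. have [q0|q0] : 0 <= Q \/ Q <= -1 by lia. by [].
have : Q * n <= -1 * n by rewrite ler_pM2r. lia. Qed.

Theorem lemma5 (A B E : finType) (ea : E -> A) (eb : E -> B) (red : pred E)
  (k : nat) (Ms M Cp Me Ce : {set E}) (e es ef : E) :
  simple_graph ea eb ->
  critical ea eb red k Ms M ->
  is_Cplus ea eb red Ms M Cp ->
  e \in Eplus red M Cp ->
  is_Me ea eb red e Me ->
  is_Ce ea eb M Me Ce e ->
  es != ef -> es \in Cp -> ef \in Cp -> es \in Ce -> ef \in Ce ->
  (forall f, f \in carc ea eb M Cp es ef ->
     in_rf ea eb red M Cp Ce (carc ea eb M Ce es ef) f)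
  \/
  (forall f, f \in carc ea eb M Cp ef es ->
     in_rb ea eb red M Cp Ce (carc ea eb M Ce es ef) f).
Proof.
move=> _ _ [[sP [dP ->]] _ _] _ _ [[sE [dE ->]] _ _] nse esP efP esE efE.
have [nP0 uP usP] := dc_basic dP.
have [nE0 uE usE] := dc_basic dE.
rewrite !inE in esP efP esE efE.
pose P := carc ea eb M [set f in sE] es ef.
have Eesp : es = cyc e sP (index es sP)%:Z := in_cyc e esP.
move: (index es sP) Eesp => a Eesp.
have EesE : es = cyc e sE (index es sE)%:Z := in_cyc e esE.
have aem : (index es sE < size sE)%N by rewrite index_mem.
have iefm : (index ef sE < size sE)%N by rewrite index_mem.
have Eef0 := in_cyc e efE.
move: (index es sE) (index ef sE) EesE aem iefm Eef0 => ae ief EesE aem iefm Eef0.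
move HD : ((ief + size sE - ae) %% size sE)%N => D.
have Dm : (D < size sE)%N by rewrite -HD ltn_pmod.
have EefE : ef = cyc e sE (ae%:Z + D%:Z).
  rewrite {1}Eef0.
  have hd := divn_eq (ief + size sE - ae) (size sE).
  have -> : ae%:Z + D%:Z = ief%:Z + (1 - ((ief + size sE - ae) %/ size sE)%N%:Z) * (size sE)%:Z.
    rewrite mulrBl mul1r. rewrite HD in hd. slia.
  by rewrite cyc_add.
have D0 : (0 < D)%N.
  case: (posnP D) => // D0. move: nse. by rewrite {1}EefE {1}EesE D0 addr0 eqxx.
have Pmem : forall z, z \in P <-> exists k : nat, (k <= D)%N /\ z = cyc e sE (ae%:Z + k%:Z).
  move=> z. have := dc_carc e ae z dE Dm. by rewrite -EesE -EefE.
have inPk : forall s : nat, (s <= D)%N -> cyc e sE (ae%:Z + s%:Z) \in P.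
  by move=> s sD; apply/Pmem; exists s.
have onT : forall i, on_set ea eb [set f in sP] (tl ea eb M (cyc e sP i)).
  by move=> i; apply/(on_setP e _ dP); exists i.
pose Cov := fun L : int =>
  (forall x : int, a%:Z <= x < L -> in_rf ea eb red M [set f in sP] [set f in sE] P (cyc e sP x)) /\
  (forall x : int, L <= x <= a%:Z -> in_rb ea eb red M [set f in sP] [set f in sE] P (cyc e sP x)).
have step : forall (t0 t : nat) (L0 : int), (1 <= t0)%N -> (t0 <= t)%N -> (t < D)%N ->
    tl ea eb M (cyc e sE (ae%:Z + t0%:Z)) = tl ea eb M (cyc e sP L0) ->
    (forall s : nat, (t0 < s <= t)%N -> ~~ on_set ea eb [set f in sP] (tl ea eb M (cyc e sE (ae%:Z + s%:Z)))) ->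
    on_set ea eb [set f in sP] (tl ea eb M (cyc e sE (ae%:Z + t.+1%:Z))) ->
    Cov L0 ->
    exists L1, tl ea eb M (cyc e sE (ae%:Z + t.+1%:Z)) = tl ea eb M (cyc e sP L1) /\ Cov L1.
  move=> t0 t L0 t01 t0t tD hL0 off on1 cov.
  have inCpT : forall f, f \in sP -> on_set ea eb [set f in sP] (tl ea eb M f).
    by move=> f fP; rewrite {1}(in_cyc e fP) onT.
  have inCpH : forall f, f \in sP -> on_set ea eb [set f in sP] (hd ea eb M f).
    by move=> f fP; rewrite {1}(in_cyc e fP) (dc_next e _ dP) onT.
  have nextE : forall s : nat, hd ea eb M (cyc e sE (ae%:Z + s%:Z)) = tl ea eb M (cyc e sE (ae%:Z + s.+1%:Z)).
    move=> s. rewrite (dc_next e _ dE). congr (tl ea eb M (cyc e sE _)); slia.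
  case: (boolP ((t0 == t) && (cyc e sE (ae%:Z + t%:Z) \in sP))) => [/andP [/eqP e0 pin] | nedge].
    subst t0.
    have ept : cyc e sE (ae%:Z + t%:Z) = cyc e sP L0.
      have ep := in_cyc e pin. rewrite {1}ep in hL0. have [q hq] := dc_Tinj dP hL0.
      rewrite ep. have -> : (index (cyc e sE (ae%:Z + t%:Z)) sP)%:Z = L0 + q * (size sP)%:Z by slia.
      by rewrite cyc_add.
    exists (L0 + 1). split.
      by rewrite -nextE ept (dc_next e L0 dP).
    split => x hx.
      case: (ltrP x L0) => h. apply: cov.1; slia.
      have -> : x = L0 by slia.
      left. rewrite inE; apply/andP; split; last by rewrite inE -ept.
      rewrite -ept; apply: inPk; slia.
    apply: cov.2; slia.
  have notCp : forall s : nat, (t0 <= s <= t)%N -> cyc e sE (ae%:Z + s%:Z) \notin sP.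
    move=> s hs. apply/negP => ins.
    case: (ltnP t0 s) => h.
      by move: (off s (ltac:(slia))); rewrite inCpT.
    have es0 : s = t0 by slia. subst s.
    case: (ltnP t0 t) => h2.
      move: (off t0.+1 (ltac:(slia))). by rewrite -nextE inCpH.
    have et : t0 = t by slia. subst t0.
    by move: nedge; rewrite eqxx ins.
  have [v hv] := (on_setP e _ dP).1 on1.
  have [Qn [l [hl ln]]] := divmodP (L0 - v) nP0.
  have l0 : (0 < l)%N.
    case: (posnP l) => // l0. exfalso. subst l.
    have : tl ea eb M (cyc e sE (ae%:Z + t0%:Z)) = tl ea eb M (cyc e sE (ae%:Z + t.+1%:Z)).
      rewrite hL0 hv. have -> : L0 = v + Qn * (size sP)%:Z by slia. by rewrite cyc_add.
    move/(dc_Tinj dE) => [q hq].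
    have q0 : q = 0 by apply: (@mult_small (size sE)%:Z); slia.
    subst q. slia.
  move Hqq : (t - t0).+1 => qq.
  pose F := fun kk : nat => if (kk < qq)%N then cyc e sE (ae%:Z + (t0 + kk)%N%:Z)
                            else cyc e sP (v + (kk - qq)%N%:Z).
  pose Qs := carc ea eb M [set f in sE] (cyc e sE (ae%:Z + t0%:Z))
                  (cyc e sE ((ae%:Z + t0%:Z) + (t - t0)%N%:Z)).
  have tdm : ((t - t0)%N < size sE)%N by slia.
  have Qmem : forall z, z \in Qs <-> exists s : nat, (t0 <= s <= t)%N /\ z = cyc e sE (ae%:Z + s%:Z).
    move=> z. split.
      move/(dc_carc e (ae%:Z + t0%:Z) z dE tdm) => [kk [hk ->]].
      exists (t0 + kk)%N. split; first slia. congr (cyc e sE _); slia.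
    case=> s [hs ->]. apply/(dc_carc e (ae%:Z + t0%:Z) _ dE tdm).
    exists (s - t0)%N. split; first slia. congr (cyc e sE _); slia.
  have ey : cyc e sE ((ae%:Z + t0%:Z) + (t - t0)%N%:Z) = cyc e sE (ae%:Z + t%:Z).
    congr (cyc e sE _); slia.
  have QsP : Qs \subset P.
    apply/subsetP => z /Qmem [s [hs ->]]. apply: inPk; slia.
  have Qdis : [disjoint Qs & [set f in sP]].
    rewrite disjoint_subset; apply/subsetP => z /Qmem [s [hs ->]]. rewrite !inE. exact: notCp.
  have notQ : forall x, cyc e sP x \notin Qs.
    move=> x. apply/negP => /Qmem [s [hs h]]. have := notCp s hs. by rewrite -h cyc_in.
  have jumpQ : jump ea eb M [set f in sP] [set f in sE] Qs.
    exists (cyc e sE (ae%:Z + t0%:Z)), (cyc e sE ((ae%:Z + t0%:Z) + (t - t0)%N%:Z)). split.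
    - split; [by rewrite inE cyc_in | by rewrite inE cyc_in | by [] | ].
      apply/negP => /eqP QC. have : es \in Qs by rewrite QC inE.
      by move/Qmem => [s [hs h]]; move: (notCp s hs); rewrite -h esP.
    - by rewrite hL0 onT.
    - by rewrite ey nextE.
    - move=> z /Qmem [s [hs ->]] zy. rewrite nextE. apply: off.
      case: (ltnP s t) => hst; first slia.
      have es1 : s = t by slia. by rewrite ey es1 eqxx in zy.
    - exact: Qdis.
  pose CQ := [set f in mkseq F (qq + l)].
  have FQ : forall kk, (kk < qq)%N -> F kk = cyc e sE (ae%:Z + (t0 + kk)%N%:Z).
    by move=> kk hk; rewrite /F hk.
  have FP : forall kk, (qq <= kk)%N -> F kk = cyc e sP (v + (kk - qq)%N%:Z).
    by move=> kk hk; rewrite /F ltnNge hk.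
  have mixed : forall i j, (i < qq)%N -> (qq <= j)%N -> (j < qq + l)%N ->
      tl ea eb M (F i) = tl ea eb M (F j) -> False.
    move=> i j hi hj hjl. rewrite FQ // FP // => hT.
    case: (posnP i) => i0.
      subst i. rewrite addn0 hL0 in hT.
      move/(dc_Tinj dP): hT => [q hq].
      have h5 : (q - Qn) * (size sP)%:Z = q * (size sP)%:Z - Qn * (size sP)%:Z by rewrite mulrBl.
      have : q - Qn = 0 by apply: (@mult_small (size sP)%:Z); slia.
      slia.
    have := off (t0 + i)%N (ltac:(slia)). by rewrite hT onT.
  have isCQ : is_CQ ea eb M [set f in sP] Qs CQ.
    split.
    - apply: mk_dcycle.
      + slia.
      + move=> i hi. case: (ltnP i.+1 qq) => h.
          rewrite !FQ; try slia. rewrite nextE. congr (tl ea eb M (cyc e sE _)); slia.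
        case: (ltnP i qq) => h'.
          have ei : (t0 + i)%N = t by slia.
          rewrite FQ // FP; last slia. rewrite ei nextE hv. congr (tl ea eb M (cyc e sP _)); slia.
        rewrite !FP; try slia. rewrite (dc_next e _ dP). congr (tl ea eb M (cyc e sP _)); slia.
      + rewrite FP; last slia. rewrite FQ; last slia.
        rewrite (dc_next e _ dP) addn0 hL0.
        have -> : L0 = (v + ((qq + l).-1 - qq)%N%:Z + 1) + Qn * (size sP)%:Z by slia.
        by rewrite cyc_add.
      + move=> i j hi hj.
        case: (ltnP i qq) => hi'; case: (ltnP j qq) => hj'.
        * rewrite !FQ // => /(dc_Tinj dE) [q hq].
          have q0 : q = 0 by apply: (@mult_small (size sE)%:Z); slia.
          subst q; slia.
        * move=> hT; exfalso; exact: (mixed i j).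
        * move=> hT; exfalso; exact: (mixed j i _ _ _ (esym hT)).
        * rewrite !FP // => /(dc_Tinj dP) [q hq].
          have q0 : q = 0 by apply: (@mult_small (size sP)%:Z); slia.
          subst q; slia.
    - apply/subsetP => f; rewrite inE => /mem_mkseqP [kk hk ->]. rewrite in_setU.
      case: (ltnP kk qq) => h.
        rewrite FQ //. apply/orP; right. apply/Qmem. exists (t0 + kk)%N; split; first slia. by [].
      by rewrite FP // inE cyc_in.
    - apply/subsetP => z /Qmem [s [hs ->]]. rewrite inE. apply/mem_mkseqP.
      exists (s - t0)%N; first slia. rewrite FQ; last slia.
      congr (cyc e sE _); slia.
  case hw : (0 < wM red M CQ).
  - exists (L0 + (size sP)%:Z - l%:Z). split.
      rewrite hv. have -> : L0 + (size sP)%:Z - l%:Z = v + (Qn + 1) * (size sP)%:Z.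
        rewrite mulrDl mul1r. slia.
      by rewrite cyc_add.
    split => x hx.
      case: (ltrP x L0) => h. apply: cov.1; slia.
      right. exists Qs. split => //.
        by exists CQ; split => //; rewrite hw.
      exists CQ; split => //. rewrite hw in_setD; apply/andP; split; last by rewrite inE cyc_in.
      rewrite inE; apply/negP => /mem_mkseqP [kk hk]. case: (ltnP kk qq) => hk'.
        rewrite FQ // => ex. have := notCp (t0 + kk)%N (ltac:(slia)). by rewrite -ex cyc_in.
      rewrite FP // => /(congr1 (tl ea eb M)) /(dc_Tinj dP) [q hq].
      have h5 : (q - Qn) * (size sP)%:Z = q * (size sP)%:Z - Qn * (size sP)%:Z by rewrite mulrBl.
      have : q - Qn = 0 by apply: (@mult_small (size sP)%:Z); slia.
      slia.
    apply: cov.2; slia.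
  - exists (L0 - l%:Z). split.
      rewrite hv. have -> : L0 - l%:Z = v + Qn * (size sP)%:Z by slia. by rewrite cyc_add.
    split => x hx.
      apply: cov.1; slia.
    case: (lerP L0 x) => h. apply: cov.2; slia.
    exists Qs. split => //.
      by exists CQ; split => //; rewrite hw.
    exists CQ; split => //. rewrite hw /= in_setD. apply/andP; split.
      exact: notQ.
    rewrite inE.
    have [i hi] : exists i : nat, x = L0 - l%:Z + i%:Z by exists (absz (x - (L0 - l%:Z))%R); slia.
    apply/mem_mkseqP. exists (qq + i)%N; first slia.
    rewrite FP; last slia.
    have -> : x = (v + (qq + i - qq)%N%:Z) + Qn * (size sP)%:Z by slia.
    by rewrite cyc_add.
have W : forall t : nat, (1 <= t <= D)%N -> exists t0 : nat, exists L : int,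
    [/\ (1 <= t0 <= t)%N, tl ea eb M (cyc e sE (ae%:Z + t0%:Z)) = tl ea eb M (cyc e sP L),
     (forall s : nat, (t0 < s <= t)%N -> ~~ on_set ea eb [set f in sP] (tl ea eb M (cyc e sE (ae%:Z + s%:Z)))) &
     Cov L].
  elim => [|t IH] ht; first by slia.
  case: (posnP t) => [t0|tpos].
    subst t. exists 1%N, (a%:Z + 1). split => //.
    - rewrite (_ : ae%:Z + (1%N)%:Z = ae%:Z + 1) //.
      rewrite -(dc_next e ae%:Z dE) -EesE {1}Eesp (dc_next e a%:Z dP) //.
    - move=> s hs; slia.
    - split => x hx.
        have -> : x = a%:Z by slia.
        left. rewrite inE -Eesp inE esP andbT. apply/Pmem; exists 0%N; split => //.
        have -> : ae%:Z + (0%N)%:Z = ae%:Z by slia.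
        exact: EesE.
      slia.
  have [t0 [L [h1 h2 h3 h4]]] := IH (ltac:(slia)).
  case: (boolP (on_set ea eb [set f in sP] (tl ea eb M (cyc e sE (ae%:Z + t.+1%:Z))))) => hon.
    have [L1 [hL1 cov1]] := step t0 t L (ltac:(slia)) (ltac:(slia)) (ltac:(slia)) h2 h3 hon h4.
    exists t.+1, L1. split => //; first by slia.
    move=> s hs; slia.
  exists t0, L. split => //; first by slia.
  move=> s hs. case: (ltnP s t.+1) => hs2. apply: h3; slia.
  have -> : s = t.+1 by slia.
  exact: hon.
have [t0 [L [ht0 hL off cov]]] := W D (ltac:(slia)).
have t0D : t0 = D.
  case: (ltnP t0 D) => h; last slia.
  have := off D (ltac:(slia)). by rewrite -EefE {1}(in_cyc e efP) onT.
subst t0. rewrite -EefE in hL.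
have EefP : ef = cyc e sP L.
  rewrite {1}(in_cyc e efP) in hL. have [q hq] := dc_Tinj dP hL.
  rewrite {1}(in_cyc e efP). have -> : (index ef sP)%:Z = L + q * (size sP)%:Z by slia.
  by rewrite cyc_add.
have efPP : ef \in P :&: [set f in sP] by rewrite inE {1}EefE inPk // inE efP.
case: (lerP a%:Z L) => hLa.
- left => f.
  have [Qd [dd [hdd ddn]]] := divmodP (L - a%:Z) nP0.
  have Qd0 : 0 <= Qd by apply: (@q_ge0 (size sP)%:Z); slia.
  have hq : 0 <= Qd * (size sP)%:Z by apply: mulr_ge0; slia.
  have EefP2 : ef = cyc e sP (a%:Z + dd%:Z).
    rewrite EefP. have -> : L = (a%:Z + dd%:Z) + Qd * (size sP)%:Z by slia. by rewrite cyc_add.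
  rewrite {1}Eesp {1}EefP2 => /(dc_carc e a f dP ddn) [kk [kd ->]].
  case: (ltrP (a%:Z + kk%:Z) L) => h2.
    apply: cov.1; slia.
  have -> : a%:Z + kk%:Z = L by slia.
  left. by rewrite -EefP.
- right => f.
  have [Qd [dd [hdd ddn]]] := divmodP (a%:Z - L) nP0.
  have Qd0 : 0 <= Qd by apply: (@q_ge0 (size sP)%:Z); slia.
  have hq : 0 <= Qd * (size sP)%:Z by apply: mulr_ge0; slia.
  have EesP2 : es = cyc e sP (L + dd%:Z).
    rewrite Eesp. have -> : a%:Z = (L + dd%:Z) + Qd * (size sP)%:Z by slia. by rewrite cyc_add.
  rewrite {1}EefP {1}EesP2 => /(dc_carc e L f dP ddn) [kk [kd ->]].
  apply: cov.2; slia.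
Qed.
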